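(* Let $m\ge 2$, $\widetilde m\ge 1$, and let $\ell_1=\lfloor (m+\widetilde m)/2\rfloor$, $\ell_2=\lceil (m+\widetilde m)/2\rceil$. Let $\mathcal{T}^1=(t^1_i)_{i\in\mathbb{Z}}$ be strictly increasing and let $\mathcal{T}^0=(t^0_i)_{i\in\mathbb{Z}}$ with $t^0_i=t^1_{2i}$. Set $V_0=S_{m,\mathcal{T}^0}$, $V_1=S_{m,\mathcal{T}^1}$. For each $k$ let $$\Xi_k=\big(t^0_{k+1-\ell_1},t^0_{k+2-\ell_1},\dots,t^0_k,\;t^1_{2k+1},\;t^0_{k+1},\dots,t^0_{k+\ell_2}\big)$$ (a strictly increasing sequence of $m+\widetilde m+1$ knots), let $N^{\Xi_k}_{m+\widetilde m}$ be the B-spline of order $m+\widetilde m$ with knots $\Xi_k$, and define the wavelet $\psi_k=\alpha_k\,\frac{d^{\widetilde m}}{dt^{\widetilde m}}N^{\Xi_k}_{m+\widetilde m}$ with a constant $\alpha_k\neq 0$. Then: (1) For each $k$ there are $\sigma_k\in V_0$ and $\gamma_k\in\mathbb{R}$, $\gamma_k\ne 0$, such that $\psi_k(t)=\sigma_k(t)+\gamma_k\,(t-t^1_{2k+1})_+^{m-1}$ for all $t\in\mathbb{R}$. (2) Let $s_1\in V_1$ be compactly supported and suppose $s_1=s_0+\sum_k d_k\psi_k$ (finite sum) with $s_0\in V_0$ and $d_k\in\mathbb{R}$. Write $s_1(t)=\sum_{i\in\mathbb{Z}}a_i\,(t-t^1_i)_+^{m-1}$ (truncated power representation). Then for every $k$,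 $$d_k=\frac{a_{2k+1}}{\gamma_k},$$ where $a_{2k+1}$ equals $\frac{1}{(m-1)!}$ times the jump of $s_1^{(m-1)}$ at $t^1_{2k+1}$ and $\gamma_k$ equals $\frac{1}{(m-1)!}$ times the jump of $\psi_k^{(m-1)}$ at $t^1_{2k+1}$.
   Context: For a strictly increasing knot sequence $\mathcal{T}=(t_i)_{i\in\mathbb{Z}}$ and an integer $m\ge 2$, the spline space of order $m$ is $S_{m,\mathcal{T}}=\{f\in C^{m-2}(\mathbb{R}): f|_{(t_i,t_{i+1}]}\text{ is a polynomial of degree}<m \text{ for all } i\}$. For a finite strictly increasing knot sequence $\xi_0<\xi_1<\dots<\xi_{r}$, the B-spline of order $r$ with these knots is the (up to normalization unique) nonzero piecewise polynomial of degree $<r$ with breakpoints $\xi_i$, in $C^{r-2}(\mathbb{R})$, supported on $[\xi_0,\xi_r]$ (normalized, e.g., so that B-splines form a partition of unity; the normalization is absorbed in $\alpha_k$). The truncated power is $(t)_+^{j}=\chi_{(0,\infty)}(t)\,t^j$. The jump of a piecewise constant function $g$ at $\tau$ means $g(\tau+)-g(\tau-)$. *)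

(* Defs.v *)
From Stdlib Require Import Reals ZArith Lia Lra.
Open Scope R_scope.

Fixpoint sumR (n : nat) (f : nat -> R) : R :=
  match n with
  | O => 0
  | S n' => sumR n' f + f n'
  end.

(* sumZ lo hi f = sum of f k for lo <= k <= hi (empty if hi < lo) *)
Definition sumZ (lo hi : Z) (f : Z -> R) : R :=
  sumR (Z.to_nat (hi - lo + 1)) (fun j => f (lo + Z.of_nat j)%Z).

Definition tpow (j : nat) (x : R) : R :=
  if Rlt_dec 0 x then x ^ j else 0.

Definition deriv_chain (n : nat) (D : nat -> R -> R) : Prop :=
  forall j, (j < n)%nat -> forall x, derivable_pt_lim (D j) x (D (S j) x).

Definition nth_deriv (n : nat) (f g : R -> R) : Prop :=
  exists D : nat -> R -> R,
    (forall x, D O x = f x) /\ deriv_chain n D /\ (forall x, D n x = g x).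

Definition Ck (k : nat) (f : R -> R) : Prop :=
  exists D : nat -> R -> R,
    (forall x, D O x = f x) /\ deriv_chain k D /\ continuity (D k).

Definition poly_on (m : nat) (a b : R) (f : R -> R) : Prop :=
  exists c : nat -> R, forall x, a < x <= b -> f x = sumR m (fun j => c j * x ^ j).

Definition strictly_increasing (t : Z -> R) : Prop :=
  forall i, t i < t (i + 1)%Z.

Definition spline (m : nat) (t : Z -> R) (f : R -> R) : Prop :=
  Ck (m - 2) f /\ forall i : Z, poly_on m (t i) (t (i + 1)%Z) f.

(* N is a (nonzero, arbitrarily normalized) B-spline of order r with the
   strictly increasing knots xi 0 < xi 1 < ... < xi r *)
Definition is_Bspline (r : nat) (xi : nat -> R) (N : R -> R) : Prop :=
  (exists x, N x <> 0) /\
  (forall j, (j < r)%nat -> poly_on r (xi j) (xi (S j)) N) /\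
  Ck (r - 2) N /\
  (forall x, x < xi O \/ xi r < x -> N x = 0).

Definition Xi (m mt : nat) (t1 : Z -> R) (k : Z) (j : nat) : R :=
  let l1 := ((m + mt) / 2)%nat in
  if (j <? l1)%nat then t1 (2 * (k + 1 - Z.of_nat l1 + Z.of_nat j))%Z
  else if (j =? l1)%nat then t1 (2 * k + 1)%Z
  else t1 (2 * (k + Z.of_nat j - Z.of_nat l1))%Z.

(* Main.v *)
Require Import Defs.
From Stdlib Require Import Reals ZArith.
From Stdlib Require Import Lia Lra ClassicalEpsilon Classical.
Open Scope R_scope.


Lemma sumR_ext n f g : (forall j, (j < n)%nat -> f j = g j) -> sumR n f = sumR n g.
Proof. induction n; simpl; intros H; [reflexivity|]. rewrite IHn by (intros; apply H; lia). rewrite H by lia. reflexivity. Qed.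

Lemma sumR_lin n a b f g : sumR n (fun j => a * f j + b * g j) = a * sumR n f + b * sumR n g.
Proof. induction n; simpl; [ring|]. rewrite IHn. ring. Qed.

Lemma sumR_plus n f g : sumR n (fun j => f j + g j) = sumR n f + sumR n g.
Proof. induction n; simpl; [ring|]. rewrite IHn. ring. Qed.

Lemma sumR_scal n a f : sumR n (fun j => a * f j) = a * sumR n f.
Proof. induction n; simpl; [ring|]. rewrite IHn. ring. Qed.

Lemma sumR_zero n f : (forall j, (j < n)%nat -> f j = 0) -> sumR n f = 0.
Proof. intros H. rewrite (sumR_ext n f (fun _ => 0)) by auto. induction n; simpl; [ring|]. rewrite IHn; [ring|]. intros; apply H; lia. Qed.

Lemma sumR_shift n f : sumR (S n) f = f O + sumR n (fun j => f (S j)).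
Proof. induction n; simpl in *; [ring|]. rewrite IHn. ring. Qed.

Lemma sumR_skip r l g : (l <= r)%nat ->
  sumR (S r) g = sumR r (fun i => g (if (i <? l)%nat then i else S i)) + g l.
Proof.
  induction r; intros Hl.
  - assert (l = O) by lia. subst. simpl. ring.
  - destruct (Nat.eq_dec l (S r)).
    + subst. change (sumR (S (S r)) g) with (sumR (S r) g + g (S r)).
      f_equal. apply sumR_ext. intros j Hj. destruct (Nat.ltb_spec j (S r)); [reflexivity|lia].
    + change (sumR (S (S r)) g) with (sumR (S r) g + g (S r)).
      rewrite IHr by lia. simpl.
      destruct (Nat.ltb_spec r l); [lia|]. ring.
Qed.

Lemma sum_indicator n (lo i0 : Z) c :
  sumR n (fun j => if Z.eq_dec (lo + Z.of_nat j) i0 then c else 0) =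
  if Z_le_dec lo i0 then (if Z_lt_dec i0 (lo + Z.of_nat n) then c else 0) else 0.
Proof.
  induction n; simpl.
  - destruct (Z_le_dec lo i0); [destruct (Z_lt_dec i0 (lo + 0)); [lia|]|]; ring.
  - rewrite IHn. destruct (Z.eq_dec (lo + Z.of_nat n) i0);
    destruct (Z_le_dec lo i0); try destruct (Z_lt_dec i0 (lo + Z.of_nat n));
    try destruct (Z_lt_dec i0 (lo + Z.pos (Pos.of_succ_nat n))); try lia; ring.
Qed.

Lemma deriv_loc f g a b x l : a < x < b -> (forall y, a < y < b -> f y = g y) ->
  derivable_pt_lim f x l -> derivable_pt_lim g x l.
Proof.
  intros Hx Hfg H eps Heps. destruct (H eps Heps) as [d Hd].
  assert (Hp : 0 < Rmin d (Rmin (x - a) (b - x))).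
  { apply Rmin_pos; [apply cond_pos|apply Rmin_pos; lra]. }
  exists (mkposreal _ Hp). intros h Hh0 Hh. simpl in Hh.
  assert (Hh1 : Rabs h < d) by (eapply Rlt_le_trans; [exact Hh|apply Rmin_l]).
  assert (Hh2 : Rabs h < x - a) by (eapply Rlt_le_trans; [exact Hh|eapply Rle_trans; [apply Rmin_r|apply Rmin_l]]).
  assert (Hh3 : Rabs h < b - x) by (eapply Rlt_le_trans; [exact Hh|eapply Rle_trans; [apply Rmin_r|apply Rmin_r]]).
  rewrite <- Hfg, <- (Hfg x) by (split; lra || (apply Rabs_def2 in Hh2; apply Rabs_def2 in Hh3; lra)).
  apply Hd; assumption.
Qed.

Lemma deriv_ext f g x l : (forall y, f y = g y) -> derivable_pt_lim f x l -> derivable_pt_lim g x l.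
Proof.
  intros Hfg H. apply (deriv_loc f g (x-1) (x+1)); auto. lra.
Qed.

Lemma deriv_sum n (F F' : nat -> R -> R) x :
  (forall j, (j < n)%nat -> derivable_pt_lim (F j) x (F' j x)) ->
  derivable_pt_lim (fun y => sumR n (fun j => F j y)) x (sumR n (fun j => F' j x)).
Proof.
  induction n; intros H; simpl.
  - apply (deriv_ext (fct_cte 0)); [reflexivity|]. apply derivable_pt_lim_const.
  - apply (deriv_ext ((fun y => sumR n (fun j => F j y)) + F n)%F); [reflexivity|].
    apply derivable_pt_lim_plus; [apply IHn; intros; apply H; lia| apply H; lia].
Qed.

Lemma deriv_scal f a x l : derivable_pt_lim f x l -> derivable_pt_lim (fun y => a * f y) x (a * l).
Proof. intros H. apply (deriv_ext (mult_real_fct a f)); [reflexivity|]. apply derivable_pt_lim_scal; auto. Qed.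

Lemma deriv_plus f g x l1 l2 : derivable_pt_lim f x l1 -> derivable_pt_lim g x l2 ->
  derivable_pt_lim (fun y => f y + g y) x (l1 + l2).
Proof. intros. apply (deriv_ext (f + g)%F); [reflexivity|]. apply derivable_pt_lim_plus; auto. Qed.

Lemma deriv_minus f g x l1 l2 : derivable_pt_lim f x l1 -> derivable_pt_lim g x l2 ->
  derivable_pt_lim (fun y => f y - g y) x (l1 - l2).
Proof. intros. apply (deriv_ext (f - g)%F); [reflexivity|]. apply derivable_pt_lim_minus; auto. Qed.

Lemma deriv_const c x : derivable_pt_lim (fun _ => c) x 0.
Proof. apply (deriv_ext (fct_cte c)); [reflexivity|]. apply derivable_pt_lim_const. Qed.

Lemma deriv_powa a n x : derivable_pt_lim (fun y => (y - a) ^ n) x (INR n * (x - a) ^ pred n).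
Proof.
  apply (deriv_ext (comp (fun y => y ^ n) (fun y => y - a))); [reflexivity|].
  replace (INR n * (x - a) ^ pred n) with ((INR n * (x - a) ^ pred n) * (1 - 0)) by ring.
  apply derivable_pt_lim_comp.
  - apply (deriv_ext (id - fct_cte a)%F); [reflexivity|].
    apply derivable_pt_lim_minus; [apply derivable_pt_lim_id|apply derivable_pt_lim_const].
  - apply derivable_pt_lim_pow.
Qed.

Lemma null_const f : (forall x, derivable_pt_lim f x 0) -> forall x y, f x = f y.
Proof.
  intros H. set (pr := fun x => exist (fun l => derivable_pt_lim f x l) 0 (H x) : derivable_pt f x).
  apply (null_derivative_1 f pr). intros x. reflexivity.
Qed.

Lemma deriv_cont f x l : derivable_pt_lim f x l -> continuity_pt f x.
Proof. intros H. apply derivable_continuous_pt. exists l. exact H. Qed.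

Lemma cont_ext f g x : (forall y, f y = g y) -> continuity_pt f x -> continuity_pt g x.
Proof.
  intros Hfg H eps Heps. destruct (H eps Heps) as [alp [Ha Hb]]. exists alp. split; auto.
  intros y Hy. simpl. rewrite <- !Hfg. apply Hb. exact Hy.
Qed.

Lemma small_zero z : (forall eps, 0 < eps -> Rabs z < eps) -> z = 0.
Proof.
  intros H. destruct (Req_dec z 0); auto. exfalso.
  specialize (H (Rabs z) (Rabs_pos_lt _ H0)). lra.
Qed.

Lemma cont_left_zero F u t : u < t -> continuity_pt F t -> (forall x, u < x < t -> F x = 0) -> F t = 0.
Proof.
  intros Hut H HF. apply small_zero. intros eps Heps.
  destruct (H eps Heps) as [alp [Ha Hb]].
  set (x := t - Rmin alp (t - u) / 2).
  assert (Hm : 0 < Rmin alp (t - u)) by (apply Rmin_pos; lra).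
  assert (Hm1 := Rmin_l alp (t-u)). assert (Hm2 := Rmin_r alp (t-u)).
  assert (Hx : u < x < t) by (unfold x; lra).
  specialize (Hb x). simpl in Hb. unfold R_dist in Hb. rewrite HF in Hb by auto.
  replace (Rabs (F t)) with (Rabs (0 - F t)) by (rewrite Rabs_minus_sym; f_equal; ring).
  apply Hb. split. { split; [exact I| unfold x; lra]. }
  rewrite Rabs_left by (unfold x; lra). unfold x; lra.
Qed.

Lemma cont_left_eq D E u t : u < t -> continuity_pt D t -> continuity_pt E t ->
  (forall x, u < x < t -> D x = E x) -> D t = E t.
Proof.
  intros Hut HD HE H.
  assert (Hc : continuity_pt (fun x => D x - E x) t).
  { apply (cont_ext (D - E)%F); [reflexivity|]. apply continuity_pt_minus; auto. }
  pose proof (cont_left_zero _ u t Hut Hc) as Z. simpl in Z.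
  assert (D t - E t = 0) by (apply Z; intros; rewrite H; auto; ring). lra.
Qed.

Lemma cont_right_eq D E v t : t < v -> continuity_pt D t -> continuity_pt E t ->
  (forall x, t < x < v -> D x = E x) -> D t = E t.
Proof.
  intros Hut HD HE H.
  set (D' := fun x => D (2 * t - x)). set (E' := fun x => E (2 * t - x)).
  assert (C : forall G, continuity_pt G t -> continuity_pt (fun x => G (2*t - x)) t).
  { intros G HG. apply (cont_ext (comp G (fun x => 2*t - x))); [reflexivity|].
    apply continuity_pt_comp; [|replace (2*t - t) with t by ring; exact HG].
    apply (cont_ext (fct_cte (2*t) - id)%F); [reflexivity|].
    apply continuity_pt_minus; [apply continuity_pt_const; intros ? ?; reflexivity|apply derivable_continuous_pt; apply derivable_pt_id]. }
  assert (Z := cont_left_eq D' E' (2*t - v) t ltac:(lra) (C D HD) (C E HE)).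
  unfold D', E' in Z. replace (2*t - t) with t in Z by ring. apply Z.
  intros x Hx. apply H. lra.
Qed.

Definition cpoly (n : nat) (f : R -> R) : Prop :=
  exists c : nat -> R, forall x, f x = sumR n (fun j => c j * x ^ j).

Lemma cpoly_ext n f g : (forall x, f x = g x) -> cpoly n f -> cpoly n g.
Proof. intros H [c Hc]. exists c. intros x. rewrite <- H. auto. Qed.

Lemma cpoly_lin n a b f g : cpoly n f -> cpoly n g -> cpoly n (fun x => a * f x + b * g x).
Proof.
  intros [c Hc] [d Hd]. exists (fun j => a * c j + b * d j). intros x.
  rewrite Hc, Hd. rewrite <- sumR_lin. apply sumR_ext. intros; ring.
Qed.

Lemma cpoly_zero n : cpoly n (fun _ => 0).
Proof. exists (fun _ => 0). intros x. rewrite sumR_zero; auto. intros; ring. Qed.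

Lemma cpoly_sum n k (F : nat -> R -> R) : (forall j, (j < n)%nat -> cpoly k (F j)) ->
  cpoly k (fun x => sumR n (fun j => F j x)).
Proof.
  induction n; intros H; simpl.
  - apply cpoly_zero.
  - apply (cpoly_ext k (fun x => 1 * sumR n (fun j => F j x) + 1 * F n x)); [intros; ring|].
    apply cpoly_lin; [apply IHn; intros; apply H; lia|apply H; lia].
Qed.

Lemma cpoly_norm n f : cpoly n f -> exists c, (forall j, (n <= j)%nat -> c j = 0) /\
  forall x, f x = sumR n (fun j => c j * x ^ j).
Proof.
  intros [c Hc]. exists (fun j => if (j <? n)%nat then c j else 0). split.
  - intros j Hj. destruct (Nat.ltb_spec j n); [lia|reflexivity].
  - intros x. rewrite Hc. apply sumR_ext. intros j Hj. destruct (Nat.ltb_spec j n); [reflexivity|lia].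
Qed.

Lemma cpoly_mulX n a f : cpoly n f -> cpoly (S n) (fun x => (x - a) * f x).
Proof.
  intros H. destruct (cpoly_norm n f H) as [c [Hc0 Hc]].
  exists (fun j => (match j with O => 0 | S i => c i end) - a * c j).
  intros x. rewrite Hc.
  rewrite (sumR_ext (S n) _ (fun j => 1 * ((match j with O => 0 | S i => c i end) * x ^ j) + (- a) * (c j * x ^ j))) by (intros; ring).
  rewrite sumR_lin. rewrite sumR_shift.
  change (sumR (S n) (fun j : nat => c j * x ^ j)) with (sumR n (fun j : nat => c j * x ^ j) + c n * x ^ n).
  rewrite (Hc0 n) by lia.
  assert (E : sumR n (fun j : nat => c j * (x * x ^ j)) = x * sumR n (fun j => c j * x ^ j)).
  { rewrite <- sumR_scal. apply sumR_ext. intros; ring. }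
  simpl pow. rewrite E. ring.
Qed.

Lemma cpoly_powa a q : cpoly (S q) (fun x => (x - a) ^ q).
Proof.
  induction q.
  - exists (fun _ => 1). intros x. simpl. ring.
  - apply (cpoly_ext _ (fun x => (x - a) * (x - a) ^ q)); [intros; simpl; ring|].
    apply cpoly_mulX. auto.
Qed.

Lemma cpoly_mono n n' f : (n <= n')%nat -> cpoly n f -> cpoly n' f.
Proof.
  intros Hn H. destruct (cpoly_norm n f H) as [c [Hc0 Hc]]. exists c. intros x. rewrite Hc.
  induction Hn; [reflexivity|]. simpl. rewrite IHHn, Hc0 by lia. ring.
Qed.

Lemma cpoly_deriv n f : cpoly (S n) f -> exists f', cpoly n f' /\ forall x, derivable_pt_lim f x (f' x).
Proof.
  intros [c Hc]. exists (fun x => sumR n (fun j => c (S j) * INR (S j) * x ^ j)). split.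
  - exists (fun j => c (S j) * INR (S j)). intros; reflexivity.
  - intros x. apply (deriv_ext (fun y => sumR (S n) (fun j => c j * y ^ j))); [intros; rewrite Hc; auto|].
    replace (sumR n (fun j => c (S j) * INR (S j) * x ^ j)) with
      (sumR (S n) (fun j => c j * (INR j * x ^ pred j))).
    + apply (deriv_sum (S n) (fun j y => c j * y ^ j) (fun j y => c j * (INR j * y ^ pred j)) x).
      intros j _. apply deriv_scal. apply derivable_pt_lim_pow.
    + rewrite sumR_shift. simpl. rewrite Rmult_0_l, Rmult_0_r, Rplus_0_l. apply sumR_ext. intros; ring.
Qed.

Lemma cpoly_id n f a b : cpoly n f -> a < b -> (forall x, a < x < b -> f x = 0) -> forall x, f x = 0.
Proof.
  revert f. induction n; intros f Hf Hab H0.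
  - destruct Hf as [c Hc]. intros; rewrite Hc; reflexivity.
  - destruct (cpoly_deriv n f Hf) as [f' [Hf' Hd]].
    assert (Z : forall x, f' x = 0).
    { apply (IHn f' Hf' Hab). intros x Hx. apply (uniqueness_limite f x); [apply Hd|].
      apply (deriv_loc (fun _ => 0) f a b); auto. intros; symmetry; auto. apply deriv_const. }
    intros x. rewrite (null_const f) with (y := (a+b)/2).
    + apply H0; lra.
    + intros y. rewrite <- (Z y). apply Hd.
Qed.

Lemma cpoly_chain n f : cpoly n f -> exists H : nat -> R -> R,
  (forall x, H O x = f x) /\ deriv_chain n H /\ (forall x, H n x = 0) /\ (forall j, (j <= n)%nat -> cpoly (n - j) (H j)).
Proof.
  revert f. induction n; intros f Hf.
  - exists (fun _ => f). split; [reflexivity|]. split; [intros j Hj; lia|]. split.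
    + destruct Hf as [c Hc]. intros; rewrite Hc; reflexivity.
    + intros j Hj. assert (j = O) by lia. subst. exact Hf.
  - destruct (cpoly_deriv n f Hf) as [f' [Hf' Hd]].
    destruct (IHn f' Hf') as [H' [H0 [Hc [Hn Hp]]]].
    exists (fun j => match j with O => f | S j => H' j end). split; [reflexivity|]. split; [|split].
    + intros j Hj x. destruct j.
      * simpl. rewrite H0. apply Hd.
      * apply Hc. lia.
    + exact Hn.
    + intros j Hj. destruct j; [exact Hf|]. simpl. apply Hp. lia.
Qed.

Lemma jl_core p : forall (H : nat -> R -> R) tau, deriv_chain (S p) H -> (forall x, H (S p) x = 0) ->
  (forall j, (j < p)%nat -> H j tau = 0) -> exists c, forall x, H O x = c * (x - tau) ^ p.
Proof.
  induction p; intros H tau Hc Hz H0.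
  - exists (H O tau). intros x. simpl. rewrite Rmult_1_r. apply null_const.
    intros y. rewrite <- (Hz y). apply Hc. lia.
  - destruct (IHp (fun j => H (S j)) tau) as [c Hc1].
    + intros j Hj x. apply Hc. lia.
    + exact Hz.
    + intros j Hj. apply H0. lia.
    + exists (c / INR (S p)). intros x.
      assert (HS : INR (S p) <> 0) by (apply not_0_INR; lia).
      assert (E : forall y, H O y - c / INR (S p) * (y - tau) ^ S p = H O tau - c / INR (S p) * (tau - tau) ^ S p).
      { intros y. apply (null_const (fun y => H O y - c / INR (S p) * (y - tau) ^ S p)).
        intros z. replace 0 with (H 1%nat z - c / INR (S p) * (INR (S p) * (z - tau) ^ pred (S p))).
        - apply deriv_minus; [apply Hc; lia|]. apply deriv_scal. apply deriv_powa.
        - rewrite Hc1. simpl pred. field. exact HS. }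
      specialize (E x). rewrite H0 in E by lia.
      replace ((tau - tau) ^ S p) with 0 in E by (simpl; ring). lra.
Qed.

Lemma pow_le1 h n : 0 <= h <= 1 -> h ^ n <= 1.
Proof.
  intros Hh. induction n; simpl; [lra|].
  assert (0 <= h ^ n) by (apply pow_le; lra). nra.
Qed.

Lemma tpow_0 q : tpow q 0 = 0.
Proof. unfold tpow. destruct (Rlt_dec 0 0); [lra|reflexivity]. Qed.

Lemma tpow_pos q x : 0 < x -> tpow q x = x ^ q.
Proof. unfold tpow. destruct (Rlt_dec 0 x); [reflexivity|lra]. Qed.

Lemma tpow_neg q x : x <= 0 -> tpow q x = 0.
Proof. unfold tpow. destruct (Rlt_dec 0 x); [lra|reflexivity]. Qed.

Lemma tpow_deriv q a x : (2 <= q)%nat ->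
  derivable_pt_lim (fun y => tpow q (y - a)) x (INR q * tpow (q - 1) (x - a)).
Proof.
  intros Hq. destruct (Rtotal_order x a) as [Hlt|[Heq|Hgt]].
  - rewrite tpow_neg by lra. rewrite Rmult_0_r.
    apply (deriv_loc (fun _ => 0) _ (x - 1) a); [lra| |apply deriv_const].
    intros y Hy. rewrite tpow_neg by lra. reflexivity.
  - subst. replace (a - a) with 0 by ring. rewrite tpow_0, Rmult_0_r.
    intros eps Heps. assert (Hp : 0 < Rmin 1 eps) by (apply Rmin_pos; lra).
    exists (mkposreal _ Hp). intros h Hh0 Hh. simpl in Hh.
    assert (H1 := Rmin_l 1 eps). assert (H2 := Rmin_r 1 eps).
    replace (a + h - a) with h by ring. replace (a - a) with 0 by ring. rewrite tpow_0.
    destruct (Rlt_dec 0 h) as [Hpos|Hnpos].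
    + rewrite tpow_pos by auto. rewrite Rabs_right in Hh by lra.
      destruct q as [|q]; [lia|]. replace ((h ^ S q - 0) / h - 0) with (h ^ q) by (simpl; field; lra).
      destruct q as [|q]; [lia|]. simpl pow.
      assert (h ^ q <= 1) by (apply pow_le1; lra). assert (0 <= h ^ q) by (apply pow_le; lra).
      rewrite Rabs_right by nra. nra.
    + rewrite tpow_neg by lra. replace ((0 - 0) / h - 0) with 0 by (field; auto).
      rewrite Rabs_R0. lra.
  - rewrite tpow_pos by lra.
    apply (deriv_loc (fun y => (y - a) ^ q) _ a (x + 1)); [lra| |].
    + intros y Hy. rewrite tpow_pos by lra. reflexivity.
    + replace (q - 1)%nat with (pred q) by lia. apply deriv_powa.
Qed.

Lemma tpow_lip1 x y : Rabs (tpow 1 x - tpow 1 y) <= Rabs (x - y).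
Proof.
  unfold tpow. destruct (Rlt_dec 0 x), (Rlt_dec 0 y); simpl; rewrite ?Rmult_1_r;
  unfold Rabs; repeat destruct Rcase_abs; lra.
Qed.

Lemma tpow1_cont a : continuity (fun y => tpow 1 (y - a)).
Proof.
  intros x0 eps Heps. exists eps. split; auto. intros x [_ Hx]. simpl in *. unfold R_dist in *.
  eapply Rle_lt_trans; [apply tpow_lip1|]. replace (x - a - (x0 - a)) with (x - x0) by ring. exact Hx.
Qed.

Lemma single_zero c y p a b : a < b -> (forall x, a < x < b -> c * (x - y) ^ p = 0) -> c = 0.
Proof.
  intros Hab H.
  destruct (Req_dec (a + (b - a)/3) y) as [E|E].
  - specialize (H (a + 2 * (b - a) / 3) ltac:(lra)).
    apply Rmult_integral in H. destruct H as [H|H]; auto.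
    exfalso. apply (pow_nonzero (a + 2 * (b - a) / 3 - y) p); auto. lra.
  - specialize (H (a + (b - a) / 3) ltac:(lra)).
    apply Rmult_integral in H. destruct H as [H|H]; auto.
    exfalso. apply (pow_nonzero (a + (b - a) / 3 - y) p); auto. lra.
Qed.

Lemma LI n : forall p (c y : nat -> R) a b, (n <= p)%nat -> a < b ->
  (forall i j, (i <= n)%nat -> (j <= n)%nat -> i <> j -> y i <> y j) ->
  (forall x, a < x < b -> sumR (S n) (fun i => c i * (x - y i) ^ p) = 0) ->
  forall i, (i <= n)%nat -> c i = 0.
Proof.
  induction n; intros p c y a b Hnp Hab Hd H i Hi.
  - assert (i = O) by lia. subst. apply (single_zero _ (y O) p a b Hab).
    intros x Hx. specialize (H x Hx). simpl in H. lra.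
  - destruct p as [|q]; [lia|].
    set (yN := y (S n)).
    assert (HS : INR (S q) <> 0) by (apply not_0_INR; lia).
    assert (Hder : forall x, derivable_pt_lim (fun z => sumR (S (S n)) (fun i => c i * (z - y i) ^ S q)) x
       (sumR (S (S n)) (fun i => c i * (INR (S q) * (x - y i) ^ q)))).
    { intros x. apply (deriv_sum (S (S n)) (fun i z => c i * (z - y i) ^ S q) (fun i z => c i * (INR (S q) * (z - y i) ^ q)) x).
      intros j _. apply deriv_scal. apply deriv_powa. }
    assert (Hd0 : forall x, a < x < b -> sumR (S (S n)) (fun i => c i * (INR (S q) * (x - y i) ^ q)) = 0).
    { intros x Hx. apply (uniqueness_limite _ x _ _ (Hder x)).
      apply (deriv_loc (fun _ => 0) _ a b x _ Hx); [intros; symmetry; apply H; auto|apply deriv_const]. }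
    assert (Hc' : forall i, (i <= n)%nat -> c i * INR (S q) * (y i - yN) = 0).
    { apply (IHn q (fun i => c i * INR (S q) * (y i - yN)) y a b); [lia|auto| |].
      - intros i0 j0 ? ? ?. apply Hd; lia.
      - intros x Hx.
        assert (E : (x - yN) * sumR (S (S n)) (fun i => c i * (INR (S q) * (x - y i) ^ q))
                   + (- INR (S q)) * sumR (S (S n)) (fun i => c i * (x - y i) ^ S q) =
                   sumR (S n) (fun i => c i * INR (S q) * (y i - yN) * (x - y i) ^ q)).
        { rewrite <- sumR_lin. change (sumR (S (S n)) ?g) with (sumR (S n) g + g (S n)).
          unfold yN. simpl pow. rewrite (sumR_ext (S n) _ (fun i => c i * INR (S q) * (y i - y (S n)) * (x - y i) ^ q)).
          - ring.
          - intros; ring. }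
        rewrite <- E, Hd0, H by auto. ring. }
    assert (Hci : forall i, (i <= n)%nat -> c i = 0).
    { intros i0 Hi0. specialize (Hc' i0 Hi0).
      assert (y i0 - yN <> 0) by (unfold yN; intro; apply (Hd i0 (S n)); lia || lra).
      apply Rmult_integral in Hc'. destruct Hc' as [Hc'|Hc']; [|lra].
      apply Rmult_integral in Hc'. destruct Hc' as [Hc'|Hc']; [auto|lra]. }
    assert (HN : c (S n) = 0).
    { apply (single_zero _ yN (S q) a b Hab). intros x Hx. specialize (H x Hx).
      change (sumR (S (S n)) ?g) with (sumR (S n) g + g (S n)) in H.
      rewrite sumR_zero in H; [unfold yN; lra|]. intros j Hj. rewrite Hci by lia. ring. }
    destruct (Nat.eq_dec i (S n)); [subst; auto|apply Hci; lia].
Qed.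

Lemma jump p f A B u tau v : (1 <= p)%nat -> Ck (p - 1) f -> u < tau -> tau < v ->
  cpoly (S p) A -> cpoly (S p) B ->
  (forall x, u < x < tau -> f x = A x) -> (forall x, tau < x < v -> f x = B x) ->
  exists c, forall x, B x - A x = c * (x - tau) ^ p.
Proof.
  intros Hp [D [HD0 [HDc HDk]]] Hu Hv HAp HBp HfA HfB.
  destruct (cpoly_chain _ _ HAp) as [HA [HA0 [HAc [HAz _]]]].
  destruct (cpoly_chain _ _ HBp) as [HB [HB0 [HBc [HBz _]]]].
  assert (L : forall j, (j <= p - 1)%nat -> forall x, u < x < tau -> D j x = HA j x).
  { induction j; intros Hj x Hx.
    - rewrite HD0, HA0. auto.
    - apply (uniqueness_limite (D j) x); [apply HDc; lia|].
      apply (deriv_loc (HA j) (D j) u tau x); auto.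
      + intros; symmetry; apply IHj; auto; lia.
      + apply HAc; lia. }
  assert (Rr : forall j, (j <= p - 1)%nat -> forall x, tau < x < v -> D j x = HB j x).
  { induction j; intros Hj x Hx.
    - rewrite HD0, HB0. auto.
    - apply (uniqueness_limite (D j) x); [apply HDc; lia|].
      apply (deriv_loc (HB j) (D j) tau v x); auto.
      + intros; symmetry; apply IHj; auto; lia.
      + apply HBc; lia. }
  assert (CD : forall j, (j <= p - 1)%nat -> continuity_pt (D j) tau).
  { intros j Hj. destruct (Nat.eq_dec j (p - 1)); [subst; apply HDk|].
    apply (deriv_cont _ _ (D (S j) tau)). apply HDc. lia. }
  assert (Eq : forall j, (j < p)%nat -> HB j tau - HA j tau = 0).
  { intros j Hj.
    rewrite <- (cont_left_eq (D j) (HA j) u tau Hu (CD j ltac:(lia))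
                 (deriv_cont _ _ _ (HAc j ltac:(lia) tau))) by (intros; apply L; auto; lia).
    rewrite <- (cont_right_eq (D j) (HB j) v tau Hv (CD j ltac:(lia))
                 (deriv_cont _ _ _ (HBc j ltac:(lia) tau))) by (intros; apply Rr; auto; lia).
    ring. }
  destruct (jl_core p (fun j x => HB j x - HA j x) tau) as [c Hc].
  - intros j Hj x. apply deriv_minus; [apply HBc|apply HAc]; auto.
  - intros x. rewrite HAz, HBz. ring.
  - exact Eq.
  - exists c. intros x. rewrite <- Hc. simpl. rewrite HA0, HB0. reflexivity.
Qed.

Lemma Ck_cont k f : Ck k f -> continuity f.
Proof.
  intros [D [HD0 [Hc Hk]]] x. apply (cont_ext (D O)); [auto|].
  destruct k; [apply Hk|]. apply (deriv_cont _ _ (D 1%nat x)). apply Hc. lia.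
Qed.

Lemma mono_nat (y : nat -> R) n : (forall j, (j < n)%nat -> y j < y (S j)) ->
  forall a b, (a < b)%nat -> (b <= n)%nat -> y a < y b.
Proof.
  intros H a b Hab. induction Hab; intros Hb; [apply H; lia|].
  eapply Rlt_trans; [apply IHHab; lia|apply H; lia].
Qed.

Lemma mono_nat_le (y : nat -> R) n : (forall j, (j < n)%nat -> y j < y (S j)) ->
  forall a b, (a <= b)%nat -> (b <= n)%nat -> y a <= y b.
Proof.
  intros H a b Hab Hb. destruct (Nat.eq_dec a b); [subst; lra|].
  left. apply (mono_nat y n H); lia.
Qed.

Lemma tpr_step p n f (y e : nat -> R) J v B : (1 <= p)%nat -> Ck (p - 1) f ->
  (forall j, (j < n)%nat -> y j < y (S j)) -> (J <= n)%nat ->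
  (forall x, x < y O -> f x = 0) ->
  (forall x, x <= y J -> f x = sumR J (fun i => e i * tpow p (x - y i))) ->
  y J < v -> cpoly (S p) B -> (forall x, y J < x < v -> f x = B x) ->
  exists e', (forall x, x <= y J -> f x = sumR (S J) (fun i => e' i * tpow p (x - y i))) /\
             (forall x, y J < x -> B x = sumR (S J) (fun i => e' i * tpow p (x - y i))).
Proof.
  intros Hp Hf Hy HJ H0 HPS Hv HB HfB.
  set (u := match J with O => y O - 1 | S J' => y J' end).
  assert (Hu : u < y J) by (unfold u; destruct J; [lra|apply Hy; lia]).
  assert (Hui : forall i, (i < J)%nat -> y i <= u).
  { intros i Hi. unfold u. destruct J; [lia|]. apply (mono_nat_le y n Hy); lia. }
  set (A := fun x => sumR J (fun i => e i * (x - y i) ^ p)).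
  assert (HA : cpoly (S p) A).
  { apply cpoly_sum. intros j _. apply (cpoly_ext _ (fun x => e j * (x - y j) ^ p + 0 * 0)); [intros; ring|].
    apply cpoly_lin; [apply cpoly_powa|apply cpoly_zero]. }
  assert (EA : forall x, u < x -> sumR J (fun i => e i * tpow p (x - y i)) = A x).
  { intros x Hx. apply sumR_ext. intros i Hi. rewrite tpow_pos; auto. specialize (Hui i Hi). lra. }
  destruct (jump p f A B u (y J) v Hp Hf Hu Hv HA HB) as [c Hc].
  - intros x Hx. rewrite HPS by lra. apply EA; lra.
  - exact HfB.
  - exists (fun i => if (i =? J)%nat then c else e i).
    assert (ES : forall x, sumR (S J) (fun i => (if (i =? J)%nat then c else e i) * tpow p (x - y i)) =
       sumR J (fun i => e i * tpow p (x - y i)) + c * tpow p (x - y J)).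
    { intros x. simpl. rewrite Nat.eqb_refl. f_equal. apply sumR_ext. intros i Hi.
      destruct (Nat.eqb_spec i J); [lia|reflexivity]. }
    split.
    + intros x Hx. rewrite ES, (tpow_neg p (x - y J)) by lra. rewrite HPS by auto. ring.
    + intros x Hx. rewrite ES, tpow_pos by lra. rewrite EA by lra.
      specialize (Hc x). lra.
Qed.

Lemma tpr p n f (y : nat -> R) : (1 <= p)%nat -> Ck (p - 1) f ->
  (forall j, (j < n)%nat -> y j < y (S j)) ->
  (forall x, x < y O -> f x = 0) -> (forall x, y n < x -> f x = 0) ->
  (forall j, (j < n)%nat -> poly_on (S p) (y j) (y (S j)) f) ->
  exists e, forall x, f x = sumR (S n) (fun i => e i * tpow p (x - y i)).
Proof.
  intros Hp Hf Hy H0 Hn Hpol.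
  assert (PS : forall J, (J <= n)%nat -> exists e, forall x, x <= y J -> f x = sumR J (fun i => e i * tpow p (x - y i))).
  { induction J; intros HJ.
    - exists (fun _ => 0). intros x Hx. simpl. destruct Hx as [Hx|Hx]; [auto|].
      subst. apply (cont_left_zero f (y O - 1)); [lra|apply Ck_cont with (k := (p-1)%nat); auto|].
      intros; apply H0; lra.
    - destruct IHJ as [e He]; [lia|].
      destruct (Hpol J ltac:(lia)) as [cB HcB].
      destruct (tpr_step p n f y e J (y (S J)) (fun x => sumR (S p) (fun j => cB j * x ^ j)) Hp Hf Hy ltac:(lia) H0 He)
        as [e' [He1 He2]].
      + apply Hy; lia.
      + exists cB; intros; reflexivity.
      + intros x Hx. apply HcB. lra.
      + exists e'. intros x Hx. destruct (Rle_dec x (y J)); [auto|].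
        rewrite <- He2 by lra. apply HcB. lra. }
  destruct (PS n ltac:(lia)) as [e He].
  destruct (tpr_step p n f y e n (y n + 1) (fun _ => 0) Hp Hf Hy ltac:(lia) H0 He) as [e' [He1 He2]].
  - lra.
  - apply cpoly_zero.
  - intros x Hx. apply Hn; lra.
  - exists e'. intros x. destruct (Rle_dec x (y n)); [auto|].
    rewrite <- He2 by lra. apply Hn. lra.
Qed.

Lemma Ck_ext k f g : (forall x, f x = g x) -> Ck k f -> Ck k g.
Proof. intros H [D [H0 H1]]. exists D. split; [intros; rewrite H0; auto|auto]. Qed.

Lemma Ck_lin k a b f g : Ck k f -> Ck k g -> Ck k (fun x => a * f x + b * g x).
Proof.
  intros [D1 [H10 [H1c H1k]]] [D2 [H20 [H2c H2k]]].
  exists (fun j x => a * D1 j x + b * D2 j x). split; [|split].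
  - intros; rewrite H10, H20; reflexivity.
  - intros j Hj x. apply deriv_plus; apply deriv_scal; auto.
  - intros x. apply (cont_ext (mult_real_fct a (D1 k) + mult_real_fct b (D2 k))%F); [reflexivity|].
    apply continuity_pt_plus; apply continuity_pt_scal; auto.
Qed.

Lemma Ck_zero k : Ck k (fun _ => 0).
Proof.
  exists (fun _ _ => 0). split; [reflexivity|split].
  - intros j Hj x. apply deriv_const.
  - intros x. apply (cont_ext (fct_cte 0)); [reflexivity|]. apply continuity_const. intros ? ?; reflexivity.
Qed.

Lemma poly_on_ext n a b f g : (forall x, a < x <= b -> f x = g x) -> poly_on n a b f -> poly_on n a b g.
Proof. intros H [c Hc]. exists c. intros x Hx. rewrite <- H by auto. auto. Qed.

Lemma poly_on_lin n u v a b f g : poly_on n u v f -> poly_on n u v g -> poly_on n u v (fun x => a * f x + b * g x).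
Proof.
  intros [c Hc] [d Hd]. exists (fun j => a * c j + b * d j). intros x Hx.
  rewrite Hc, Hd by auto. rewrite <- sumR_lin. apply sumR_ext. intros; ring.
Qed.

Lemma poly_on_cpoly n u v f : cpoly n f -> poly_on n u v f.
Proof. intros [c Hc]. exists c. intros; auto. Qed.

Lemma poly_on_zero n u v : poly_on n u v (fun _ => 0).
Proof. apply poly_on_cpoly, cpoly_zero. Qed.

Lemma poly_on_sum n k u v (F : nat -> R -> R) : (forall j, (j < n)%nat -> poly_on k u v (F j)) ->
  poly_on k u v (fun x => sumR n (fun j => F j x)).
Proof.
  induction n; intros H; simpl.
  - apply poly_on_zero.
  - apply (poly_on_ext k u v (fun x => 1 * sumR n (fun j => F j x) + 1 * F n x)); [intros; ring|].
    apply poly_on_lin; [apply IHn; intros; apply H; lia|apply H; lia].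
Qed.

Lemma poly_on_tpow q u v a : (a <= u \/ v <= a) -> poly_on (S q) u v (fun x => tpow q (x - a)).
Proof.
  intros [H|H].
  - apply (poly_on_ext _ u v (fun x => (x - a) ^ q)); [|apply poly_on_cpoly, cpoly_powa].
    intros x Hx. rewrite tpow_pos by lra. reflexivity.
  - apply (poly_on_ext _ u v (fun _ => 0)); [|apply poly_on_zero].
    intros x Hx. rewrite tpow_neg by lra. reflexivity.
Qed.

Lemma spline_ext m t f g : (forall x, f x = g x) -> spline m t f -> spline m t g.
Proof.
  intros H [H1 H2]. split; [eapply Ck_ext; eauto|]. intros i. eapply poly_on_ext; [|apply H2]. auto.
Qed.

Lemma spline_lin m t a b f g : spline m t f -> spline m t g -> spline m t (fun x => a * f x + b * g x).
Proof.
  intros [H1 H2] [H3 H4]. split; [apply Ck_lin; auto|]. intros i. apply poly_on_lin; auto.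
Qed.

Lemma spline_zero m t : spline m t (fun _ => 0).
Proof. split; [apply Ck_zero|]. intros; apply poly_on_zero. Qed.

Lemma spline_sum n m t (F : nat -> R -> R) : (forall j, (j < n)%nat -> spline m t (F j)) ->
  spline m t (fun x => sumR n (fun j => F j x)).
Proof.
  induction n; intros H; simpl.
  - apply spline_zero.
  - apply (spline_ext m t (fun x => 1 * sumR n (fun j => F j x) + 1 * F n x)); [intros; ring|].
    apply spline_lin; [apply IHn; intros; apply H; lia|apply H; lia].
Qed.

Fixpoint Kf (p j : nat) : R := match j with O => 1 | S j' => Kf p j' * INR (p - j') end.

Lemma Kf_nz p j : (j <= p)%nat -> Kf p j <> 0.
Proof.
  induction j; simpl; intros H; [lra|]. apply Rmult_integral_contrapositive. split; [apply IHj; lia|].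
  apply not_0_INR. lia.
Qed.

Lemma tpow_chain_deriv p a j x : (j + 2 <= p)%nat ->
  derivable_pt_lim (fun y => Kf p j * tpow (p - j) (y - a)) x (Kf p (S j) * tpow (p - S j) (x - a)).
Proof.
  intros H. simpl Kf. replace (Kf p j * INR (p - j) * tpow (p - S j) (x - a)) with
    (Kf p j * (INR (p - j) * tpow (p - j - 1) (x - a))).
  - apply deriv_scal. apply tpow_deriv. lia.
  - replace (p - j - 1)%nat with (p - S j)%nat by lia. ring.
Qed.

Lemma Ck_tpow m a : (2 <= m)%nat -> Ck (m - 2) (fun x => tpow (m - 1) (x - a)).
Proof.
  intros Hm. exists (fun j x => Kf (m - 1) j * tpow (m - 1 - j) (x - a)). split; [|split].
  - intros x. simpl. rewrite Nat.sub_0_r. ring.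
  - intros j Hj x. apply tpow_chain_deriv. lia.
  - replace (m - 1 - (m - 2))%nat with 1%nat by lia.
    intros x. apply (cont_ext (mult_real_fct (Kf (m-1) (m-2)) (fun y => tpow 1 (y - a)))); [reflexivity|].
    apply continuity_pt_scal. apply tpow1_cont.
Qed.

Lemma Zmono (t : Z -> R) : strictly_increasing t -> forall i j, (i < j)%Z -> t i < t j.
Proof.
  intros Ht i j Hij.
  assert (G : forall n, t i < t (i + Z.of_nat (S n))%Z).
  { induction n.
    - replace (i + Z.of_nat 1)%Z with (i + 1)%Z by lia. apply Ht.
    - eapply Rlt_trans; [exact IHn|]. replace (i + Z.of_nat (S (S n)))%Z with ((i + Z.of_nat (S n)) + 1)%Z by lia.
      apply Ht. }
  replace j with (i + Z.of_nat (S (Z.to_nat (j - i - 1))))%Z by lia. apply G.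
Qed.

Lemma Zmono_le (t : Z -> R) : strictly_increasing t -> forall i j, (i <= j)%Z -> t i <= t j.
Proof.
  intros Ht i j H. destruct (Z.eq_dec i j); [subst; lra|]. left. apply Zmono; auto. lia.
Qed.

Lemma spline_tpow m t z : (2 <= m)%nat -> strictly_increasing t -> spline m t (fun x => tpow (m - 1) (x - t z)).
Proof.
  intros Hm Ht. split; [apply Ck_tpow; auto|]. intros i.
  replace m with (S (m - 1)) at 1 by lia. apply poly_on_tpow.
  destruct (Z_le_dec z i); [left; apply Zmono_le; auto|right; apply Zmono_le; auto; lia].
Qed.

Lemma coef_zero m c u tau v : (1 <= m)%nat -> u < tau -> tau < v ->
  poly_on m u v (fun x => c * tpow (m - 1) (x - tau)) -> c = 0.
Proof.
  intros Hm Hu Hv [cc Hcc].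
  assert (Z : forall x, sumR m (fun j => cc j * x ^ j) = 0).
  { apply (cpoly_id m _ u tau); [exists cc; reflexivity|auto|].
    intros x Hx. rewrite <- Hcc by lra. rewrite tpow_neg by lra. ring. }
  set (x := (tau + v) / 2). specialize (Hcc x ltac:(unfold x; lra)). rewrite Z in Hcc.
  rewrite tpow_pos in Hcc by (unfold x; lra).
  apply Rmult_integral in Hcc. destruct Hcc as [H|H]; auto. exfalso.
  apply (pow_nonzero (x - tau) (m - 1)); auto. unfold x; lra.
Qed.

Lemma Xi_lt (m mt : nat) (t1 : Z -> R) (k : Z) j : (j < (m + mt) / 2)%nat ->
  Xi m mt t1 k j = t1 (2 * (k + 1 - Z.of_nat ((m + mt) / 2) + Z.of_nat j))%Z.
Proof. intros H. unfold Xi. cbv zeta. destruct (Nat.ltb_spec j ((m + mt) / 2)); [reflexivity|lia]. Qed.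

Lemma Xi_eq (m mt : nat) (t1 : Z -> R) (k : Z) : Xi m mt t1 k ((m + mt) / 2)%nat = t1 (2 * k + 1)%Z.
Proof. unfold Xi. cbv zeta. destruct (Nat.ltb_spec ((m + mt) / 2) ((m + mt) / 2)); [lia|]. rewrite Nat.eqb_refl. reflexivity. Qed.

Lemma Xi_gt (m mt : nat) (t1 : Z -> R) (k : Z) j : ((m + mt) / 2 < j)%nat ->
  Xi m mt t1 k j = t1 (2 * (k + Z.of_nat j - Z.of_nat ((m + mt) / 2)))%Z.
Proof.
  intros H. unfold Xi. cbv zeta. destruct (Nat.ltb_spec j ((m + mt) / 2)); [lia|].
  destruct (Nat.eqb_spec j ((m + mt) / 2)); [lia|reflexivity].
Qed.

Lemma l1_bounds (m mt : nat) : (2 <= m)%nat -> (1 <= mt)%nat -> (1 <= (m + mt) / 2)%nat /\ ((m + mt) / 2 < m + mt)%nat.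
Proof.
  intros. pose proof (Nat.div_mod_eq (m + mt) 2). pose proof (Nat.mod_upper_bound (m + mt) 2 ltac:(lia)).
  lia.
Qed.

Lemma Xi_incr (m mt : nat) (t1 : Z -> R) (k : Z) : (2 <= m)%nat -> (1 <= mt)%nat -> strictly_increasing t1 ->
  forall j, (j < m + mt)%nat -> Xi m mt t1 k j < Xi m mt t1 k (S j).
Proof.
  intros Hm Hmt Ht j Hj. destruct (l1_bounds m mt Hm Hmt) as [Hl1 Hl2].
  set (l1 := ((m + mt) / 2)%nat) in *.
  destruct (Nat.lt_total (S j) l1) as [H|[H|H]].
  - rewrite !Xi_lt by lia. apply Zmono; auto. lia.
  - rewrite Xi_lt by lia. rewrite H. unfold l1. rewrite Xi_eq. apply Zmono; auto. fold l1. lia.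
  - destruct (Nat.eq_dec j l1).
    + subst j. unfold l1. rewrite Xi_eq, Xi_gt by lia. apply Zmono; auto. lia.
    + rewrite !Xi_gt by lia. apply Zmono; auto. lia.
Qed.

Lemma Xi_even (m mt : nat) (t1 : Z -> R) (k : Z) j : j <> ((m + mt) / 2)%nat -> exists z, Xi m mt t1 k j = t1 (2 * z)%Z.
Proof.
  intros H. destruct (Nat.lt_total j ((m + mt) / 2)) as [H'|[H'|H']]; [|lia|].
  - rewrite Xi_lt by auto. eexists; reflexivity.
  - rewrite Xi_gt by auto. eexists; reflexivity.
Qed.

Definition skip (l i : nat) : nat := if (i <? l)%nat then i else S i.

Lemma part1 (m mt : nat) (hm : (2 <= m)%nat) (hmt : (1 <= mt)%nat)
  (t1 : Z -> R) (ht1 : strictly_increasing t1) (N : R -> R) (alpha : R) (psi : R -> R) (k : Z)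
  (hN : is_Bspline (m + mt) (Xi m mt t1 k) N)
  (halpha : alpha <> 0)
  (hpsi : exists g : R -> R, nth_deriv mt N g /\ forall x, psi x = alpha * g x) :
  exists gam, gam <> 0 /\ exists sigma : R -> R, spline m (fun i : Z => t1 (2 * i)%Z) sigma /\
         forall t, psi t = sigma t + gam * tpow (m - 1) (t - t1 (2 * k + 1)%Z).
Proof.
  set (r := (m + mt)%nat). set (xi := Xi m mt t1 k). set (p := (r - 1)%nat).
  set (l1 := ((m + mt) / 2)%nat).
  destruct (l1_bounds m mt hm hmt) as [Hl1 Hl2]. fold l1 in Hl1, Hl2.
  destruct hN as [Hnz [Hpol [HCk Hsupp]]].
  assert (Hinc : forall j, (j < r)%nat -> xi j < xi (S j)) by (intros; apply Xi_incr; auto).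
  destruct (tpr p r N xi) as [e He].
  - unfold p, r; lia.
  - replace (p - 1)%nat with (m + mt - 2)%nat by (unfold p, r; lia). exact HCk.
  - exact Hinc.
  - intros x Hx. apply Hsupp. auto.
  - intros x Hx. apply Hsupp. auto.
  - intros j Hj. replace (S p) with (m + mt)%nat by (unfold p, r; lia). apply Hpol. auto.
  - assert (Hel : e l1 <> 0).
    { intros He0.
      assert (Hall : forall i, (i <= r - 1)%nat -> e (skip l1 i) = 0).
      { apply (LI (r - 1) p (fun i => e (skip l1 i)) (fun i => xi (skip l1 i)) (xi r) (xi r + 1)).
        - unfold p; lia.
        - lra.
        - intros i j Hi Hj Hij. unfold skip.
          destruct (Nat.ltb_spec i l1), (Nat.ltb_spec j l1);
          (destruct (Nat.lt_total i j) as [Hlt|[Heq|Hgt]];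
           [apply Rlt_not_eq; apply (mono_nat xi r Hinc); unfold r in *; lia
           |lia
           |apply not_eq_sym, Rlt_not_eq; apply (mono_nat xi r Hinc); unfold r in *; lia]).
        - intros x Hx. replace (S (r - 1)) with r by (unfold r; lia).
          rewrite <- (Hsupp x) by (right; unfold r, xi in *; lra).
          rewrite He. rewrite (sumR_skip r l1) by (unfold r; lia). rewrite He0, Rmult_0_l, Rplus_0_r.
          apply sumR_ext. intros i Hi. rewrite tpow_pos; [reflexivity|].
          assert (xi (if (i <? l1)%nat then i else S i) <= xi r).
          { apply (mono_nat_le xi r Hinc); [destruct (Nat.ltb_spec i l1); lia|lia]. }
          unfold skip. lra. }
      destruct Hnz as [x0 Hx0]. apply Hx0. rewrite He. apply sumR_zero. intros i Hi.
      destruct (Nat.lt_total i l1) as [H|[H|H]].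
      - specialize (Hall i ltac:(unfold r in *; lia)). unfold skip in Hall.
        destruct (Nat.ltb_spec i l1); [|lia]. rewrite Hall. ring.
      - subst. rewrite He0. ring.
      - specialize (Hall (i - 1)%nat ltac:(unfold r in *; lia)). unfold skip in Hall.
        destruct (Nat.ltb_spec (i - 1) l1); [lia|]. replace (S (i - 1)) with i in Hall by lia.
        rewrite Hall. ring. }
    destruct hpsi as [g [[D [HD0 [HDc HDn]]] Hpsi]].
    assert (HDj : forall j, (j <= mt)%nat -> forall x,
       D j x = sumR (S r) (fun i => e i * (Kf p j * tpow (p - j) (x - xi i)))).
    { induction j; intros Hj x.
      - rewrite HD0, He. apply sumR_ext. intros. simpl. rewrite Nat.sub_0_r. ring.
      - apply (uniqueness_limite (D j) x); [apply HDc; lia|].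
        apply (deriv_ext (fun y => sumR (S r) (fun i => e i * (Kf p j * tpow (p - j) (y - xi i))))).
        { intros; symmetry; apply IHj; lia. }
        apply (deriv_sum (S r) (fun i y => e i * (Kf p j * tpow (p - j) (y - xi i)))
                 (fun i y => e i * (Kf p (S j) * tpow (p - S j) (y - xi i))) x).
        intros i _. apply deriv_scal. apply tpow_chain_deriv. unfold p, r; lia. }
    set (w := fun i => alpha * e i * Kf p mt).
    assert (Hpsi2 : forall x, psi x = sumR (S r) (fun i => w i * tpow (m - 1) (x - xi i))).
    { intros x. rewrite Hpsi, <- HDn, HDj by lia. rewrite <- sumR_scal. apply sumR_ext.
      intros i _. replace (p - mt)%nat with (m - 1)%nat by (unfold p, r; lia). unfold w; ring. }
    exists (w l1). split.
    { unfold w. apply Rmult_integral_contrapositive. split; [apply Rmult_integral_contrapositive; auto|].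
      apply Kf_nz. unfold p, r; lia. }
    exists (fun x => sumR r (fun i => w (skip l1 i) * tpow (m - 1) (x - xi (skip l1 i)))). split.
    + apply spline_sum. intros i Hi.
      apply (spline_ext m _ (fun x => w (skip l1 i) * tpow (m - 1) (x - xi (skip l1 i)) + 0 * 0)); [intros; ring|].
      apply spline_lin; [|apply spline_zero].
      destruct (Xi_even m mt t1 k (skip l1 i)) as [z Hz].
      { unfold skip. fold l1. destruct (Nat.ltb_spec i l1); lia. }
      unfold xi. rewrite Hz. apply (spline_tpow m (fun i0 => t1 (2 * i0)%Z) z hm).
      intros i0. apply Zmono; auto. lia.
    + intros t. rewrite Hpsi2. rewrite (sumR_skip r l1) by (unfold r; lia).
      unfold skip. f_equal. f_equal. unfold xi. rewrite <- (Xi_eq m mt t1 k). reflexivity.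
Qed.

Lemma sumZ_extract m u v lo hi (F : Z -> R -> R) (c : R) i0 (T : R -> R) :
  (~ (lo <= i0 <= hi)%Z -> c = 0) ->
  (forall i, poly_on m u v (fun x => F i x - (if Z.eq_dec i i0 then c else 0) * T x)) ->
  poly_on m u v (fun x => sumZ lo hi (fun i => F i x) - c * T x).
Proof.
  intros Hc HF. unfold sumZ. set (n := Z.to_nat (hi - lo + 1)).
  assert (Hs : sumR n (fun j => if Z.eq_dec (lo + Z.of_nat j) i0 then c else 0) = c).
  { rewrite sum_indicator. assert (Hn : Z.of_nat n = Z.max 0 (hi - lo + 1)).
    { unfold n. destruct (Z_le_dec 0 (hi - lo + 1)); [rewrite Z2Nat.id by auto; lia|].
      replace (Z.to_nat (hi - lo + 1)) with 0%nat by (destruct (hi - lo + 1)%Z eqn:?; simpl; lia). simpl. lia. }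
    destruct (Z_le_dec lo i0); [destruct (Z_lt_dec i0 (lo + Z.of_nat n))|]; auto;
    symmetry; apply Hc; lia. }
  apply (poly_on_ext m u v (fun x => sumR n (fun j => (fun j x => F (lo + Z.of_nat j)%Z x -
           (if Z.eq_dec (lo + Z.of_nat j) i0 then c else 0) * T x) j x))).
  - intros x _. simpl.
    rewrite (sumR_ext n _ (fun j => 1 * F (lo + Z.of_nat j)%Z x + (- T x) * (if Z.eq_dec (lo + Z.of_nat j) i0 then c else 0)))
      by (intros; ring).
    rewrite sumR_lin, Hs. ring.
  - apply poly_on_sum. intros j _. apply HF.
Qed.

Theorem mainTheorem2
  (m mt : nat) (hm : (2 <= m)%nat) (hmt : (1 <= mt)%nat)
  (t1 : Z -> R) (ht1 : strictly_increasing t1)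
  (N : Z -> R -> R) (alpha : Z -> R) (psi : Z -> R -> R)
  (hN : forall k, is_Bspline (m + mt) (Xi m mt t1 k) (N k))
  (halpha : forall k, alpha k <> 0)
  (hpsi : forall k, exists g : R -> R,
     nth_deriv mt (N k) g /\ forall x, psi k x = alpha k * g x) :
  let t0 := fun i : Z => t1 (2 * i)%Z in
  exists gamma : Z -> R,
    (forall k : Z, gamma k <> 0 /\
       exists sigma : R -> R, spline m t0 sigma /\
         forall t, psi k t = sigma t + gamma k * tpow (m - 1) (t - t1 (2 * k + 1)%Z))
    /\
    (forall (s1 s0 : R -> R) (K : Z) (d : Z -> R) (L : Z) (a : Z -> R),
       spline m t1 s1 ->
       (exists A B : R, forall t, t < A \/ B < t -> s1 t = 0) ->
       spline m t0 s0 ->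
       (forall k, (K < Z.abs k)%Z -> d k = 0) ->
       (forall t, s1 t = s0 t + sumZ (- K) K (fun k => d k * psi k t)) ->
       (forall i, (L < Z.abs i)%Z -> a i = 0) ->
       (forall t, s1 t = sumZ (- L) L (fun i => a i * tpow (m - 1) (t - t1 i))) ->
       forall k : Z, d k = a (2 * k + 1)%Z / gamma k).
Proof.
  intros t0.
  assert (P1 := fun k => part1 m mt hm hmt t1 ht1 (N k) (alpha k) (psi k) k (hN k) (halpha k) (hpsi k)).
  set (gamma := fun k => proj1_sig (constructive_indefinite_description _ (P1 k))).
  assert (HG : forall k, gamma k <> 0 /\ exists sigma : R -> R, spline m t0 sigma /\
         forall t, psi k t = sigma t + gamma k * tpow (m - 1) (t - t1 (2 * k + 1)%Z)).
  { intros k. exact (proj2_sig (constructive_indefinite_description _ (P1 k))). }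
  exists gamma. split; [exact HG|].
  intros s1 s0 K d L a Hs1 Hsupp Hs0 Hd Hdec Ha Hrep k.
  set (tau := t1 (2 * k + 1)%Z). set (u := t0 k). set (v := t0 (k + 1)%Z).
  assert (Hu : u < tau) by (unfold u, t0, tau; apply Zmono; auto; lia).
  assert (Hv : tau < v) by (unfold v, t0, tau; apply Zmono; auto; lia).
  set (T := fun x => tpow (m - 1) (x - tau)).
  assert (Hm1 : m = S (m - 1)) by lia.
  assert (P_L : poly_on m u v (fun x => s1 x - a (2 * k + 1)%Z * T x)).
  { apply (poly_on_ext m u v (fun x => sumZ (- L) L (fun i => a i * tpow (m - 1) (x - t1 i)) - a (2 * k + 1)%Z * T x)).
    { intros x _. rewrite Hrep. reflexivity. }
    apply (sumZ_extract m u v (- L) L (fun i x => a i * tpow (m - 1) (x - t1 i)) _ (2 * k + 1)%Z T).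
    - intros H. apply Ha. lia.
    - intros i. destruct (Z.eq_dec i (2 * k + 1)) as [E|E].
      + subst i. apply (poly_on_ext m u v (fun _ => 0)); [|apply poly_on_zero]. intros; unfold T, tau; ring.
      + apply (poly_on_ext m u v (fun x => a i * tpow (m - 1) (x - t1 i) + 0 * 0)); [intros; ring|].
        apply poly_on_lin; [|apply poly_on_zero]. rewrite Hm1 at 1. apply poly_on_tpow.
        destruct (Z_le_dec i (2 * k)).
        * left. unfold u, t0. apply Zmono_le; auto.
        * right. unfold v, t0. apply Zmono_le; auto. lia. }
  assert (P_R : poly_on m u v (fun x => s0 x + sumZ (- K) K (fun k' => d k' * psi k' x) - (d k * gamma k) * T x)).
  { apply (poly_on_ext m u v (fun x => 1 * s0 x + 1 * (sumZ (- K) K (fun k' => d k' * psi k' x) - (d k * gamma k) * T x)));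
      [intros; ring|].
    apply poly_on_lin; [apply Hs0|].
    apply (sumZ_extract m u v (- K) K (fun k' x => d k' * psi k' x) _ k T).
    - intros H. rewrite (Hd k) by lia. ring.
    - intros k'. destruct (HG k') as [_ [sg [Hsg Hpk]]]. destruct (Z.eq_dec k' k) as [E|E].
      + subst k'. apply (poly_on_ext m u v (fun x => d k * sg x + 0 * 0)).
        { intros x _. rewrite Hpk. unfold T, tau. ring. }
        apply poly_on_lin; [apply Hsg|apply poly_on_zero].
      + apply (poly_on_ext m u v (fun x => d k' * sg x + (d k' * gamma k') * tpow (m - 1) (x - t1 (2 * k' + 1)%Z))).
        { intros x _. rewrite Hpk. ring. }
        apply poly_on_lin; [apply Hsg|]. rewrite Hm1 at 1. apply poly_on_tpow.
        destruct (Z_le_dec k' k).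
        * left. unfold u, t0. apply Zmono_le; auto. lia.
        * right. unfold v, t0. apply Zmono_le; auto. lia. }
  assert (P : poly_on m u v (fun x => (a (2 * k + 1)%Z - d k * gamma k) * tpow (m - 1) (x - tau))).
  { apply (poly_on_ext m u v (fun x => (-1) * (s1 x - a (2 * k + 1)%Z * T x) +
        1 * (s0 x + sumZ (- K) K (fun k' => d k' * psi k' x) - (d k * gamma k) * T x))).
    - intros x _. rewrite (Hdec x). unfold T. ring.
    - apply poly_on_lin; auto. }
  assert (Z0 := coef_zero m _ u tau v ltac:(lia) Hu Hv P).
  destruct (HG k) as [Hg _]. field_simplify_eq; [|exact Hg]. lra.
Qed.
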